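(* Assume the standing setting below. If $I$ is a dually safe feasible set, then $\mathring{\mathsf{span}}_M(I)\cap E_1$ is a base of $N^*\upharpoonright(\mathsf{span}_M(I)\cap E_1)$.
   Context: Standing setting: $E$ is countable, $M$ is a finitary matroid on $E$, $N$ is a matroid on $E$ that is a direct sum of a finitary and a cofinitary matroid. $E_0$ is the union of the finitary components of $N$ (components = connected components of the circuit hypergraph), $E_1:=E\setminus E_0$, $F^j:=F\cap E_j$. $\mathring{\mathsf{span}}_M(F):=\mathsf{span}_M(F)\setminus F$. $F$ is dually safe if $F^1\subseteq\mathsf{span}_{N^*}(\mathring{\mathsf{span}}_M(F))$. Matroids are possibly infinite; $M/X:=(M^*\upharpoonright(E\setminus X))^*$, $M.X:=M/(E\setminus X)$; $r(K)=0$ means $\varnothing$ is a base of $K$. $W$ is an $(M,N)$-wave if $M\upharpoonright W$ has a base independent in $N.W$. $\mathsf{cond}(M,N)$: for every $(M,N)$-wave $W$, $N.W$ has an $M$-independent base. A set $I$ independent in both $M$ and $N$ is feasible if $\mathsf{cond}(M/I,N/I)$ holds. *)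

(* Defs.v *)
From Stdlib Require Import List Relations.

Set Implicit Arguments.

Section Sets.
Variable E : Type.
Definition sub (A B : E -> Prop) : Prop := forall x, A x -> B x.
Definition inter (A B : E -> Prop) : E -> Prop := fun x => A x /\ B x.
Definition union (A B : E -> Prop) : E -> Prop := fun x => A x \/ B x.
Definition diff (A B : E -> Prop) : E -> Prop := fun x => A x /\ ~ B x.
Definition add (A : E -> Prop) (e : E) : E -> Prop := fun x => A x \/ x = e.
Definition rem (A : E -> Prop) (e : E) : E -> Prop := fun x => A x /\ x <> e.
Definition empty : E -> Prop := fun _ => False.
Definition finite (A : E -> Prop) : Prop := exists l : list E, forall x, A x -> In x l.
End Sets.

Record pmat (E : Type) := PMat { grd : E -> Prop ; ind : (E -> Prop) -> Prop }.
Arguments PMat {E}.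

Section Matroids.
Variable E : Type.
Implicit Types (M N : pmat E) (X I B C : E -> Prop).

Definition base M B : Prop :=
  ind M B /\ forall I, ind M I -> sub B I -> sub I B.

Definition is_matroid M : Prop :=
  ind M (@empty E) /\
  (forall I, ind M I -> sub I (grd M)) /\
  (forall I J, ind M I -> sub J I -> ind M J) /\
  (forall I B, ind M I -> ~ base M I -> base M B ->
     exists x, B x /\ ~ I x /\ ind M (add I x)) /\
  (forall I X, ind M I -> sub I X -> sub X (grd M) ->
     exists J, ind M J /\ sub I J /\ sub J X /\
       forall J', ind M J' -> sub J J' -> sub J' X -> sub J' J).

(* dual: bases of M* are complements of bases of M *)
Definition dual M : pmat E :=
  PMat (grd M) (fun I => sub I (grd M) /\
                 exists B, base M B /\ forall x, I x -> ~ B x).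

Definition restr M X : pmat E :=
  PMat (inter X (grd M)) (fun I => ind M I /\ sub I X).

Definition contr M X : pmat E := dual (restr (dual M) (diff (grd M) X)).

Definition contract_to M X : pmat E := contr M (diff (grd M) X).

Definition circuit M C : Prop :=
  sub C (grd M) /\ ~ ind M C /\ forall x, C x -> ind M (rem C x).

Definition span M X : E -> Prop :=
  fun e => grd M e /\ (X e \/ exists C, circuit M C /\ C e /\ sub C (add X e)).

Definition spano M X : E -> Prop := diff (span M X) X.

Definition finitary M : Prop :=
  forall I, sub I (grd M) -> (forall F, finite F -> sub F I -> ind M F) -> ind M I.

Definition cofinitary M : Prop := finitary (dual M).

(* N is the direct sum of a finitary and a cofinitary matroid *)
Definition fin_cofin_sum N : Prop :=
  exists A, sub A (grd N) /\
    (forall I, sub I (grd N) ->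
       (ind N I <-> ind N (inter I A) /\ ind N (diff I A))) /\
    finitary (restr N A) /\ cofinitary (restr N (diff (grd N) A)).

Definition circ_adj M : relation E :=
  fun x y => exists C, circuit M C /\ C x /\ C y.

Definition component M x : E -> Prop :=
  fun y => grd M y /\ clos_refl_trans E (circ_adj M) x y.

Definition E0 N : E -> Prop :=
  fun x => grd N x /\ finitary (restr N (component N x)).
Definition E1 N : E -> Prop := diff (grd N) (E0 N).

Definition dually_safe M N F : Prop :=
  sub (inter F (E1 N)) (span (dual N) (spano M F)).

Definition wave M N W : Prop :=
  sub W (grd M) /\
  exists B, base (restr M W) B /\ ind (contract_to N W) B.

Definition cond M N : Prop :=
  forall W, wave M N W -> exists B, base (contract_to N W) B /\ ind M B.

Definition feasible M N I : Prop :=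
  ind M I /\ ind N I /\ cond (contr M I) (contr N I).

End Matroids.

(* Main.v *)
From Stdlib Require Import List Relations Classical.
Require Import Defs.
Set Implicit Arguments.
Unset Strict Implicit.

Lemma fund_circ (E : Type) (M : pmat E) (B : E -> Prop) (x : E) :
  is_matroid M -> base M B -> grd M x -> ~ B x ->
  exists C, circuit M C /\ C x /\ sub C (add B x).
Proof.
  intros HM HB Hx Hnx. destruct HM as (H0 & Hg & Hs & H3 & HIM).
  set (C := fun u => u = x \/ (B u /\ ind M (add (rem B u) x))).
  assert (HCsub : sub C (add B x)).
  { intros u [Hu|[Bu _]]; unfold add; auto. }
  exists C. split; [|split]; [|left; reflexivity| exact HCsub].
  split; [|split].
  - intros u [Hu|[Bu _]]. subst; auto. apply (Hg B (proj1 HB)); auto.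
  - intro HC.
    destruct (HIM C (add B x)) as (J & HJ & HCJ & HJX & HJmax); auto.
    { intros u [Bu|Hu]. apply (Hg B (proj1 HB)); auto. subst; auto. }
    assert (Hnot : ~ ind M (add B x)).
    { intro Hi. destruct HB as [_ Hm]. apply Hnx. apply (Hm _ Hi).
      intros u Hu; left; auto. right; reflexivity. }
    assert (exists t, add B x t /\ ~ J t) as (t & Ht & HnJt).
    { apply NNPP; intro Hn. apply Hnot. apply (Hs J); auto. intros u Hu.
      apply NNPP; intro. apply Hn; eauto. }
    assert (Bt : B t).
    { destruct Ht as [Bt | Ht]; auto. subst. exfalso; apply HnJt, HCJ; left; auto. }
    destruct (classic (base M J)) as [HbJ | HnbJ].
    + destruct (H3 (rem B t) J) as (u & Ju & Hnu & Hiu).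
      * apply (Hs B); [exact (proj1 HB)| intros v [Bv _]; auto].
      * intros [_ Hm]. assert (Hrt : rem B t t) by (apply (Hm B (proj1 HB)); [intros v [Bv _]; auto | auto]).
        destruct Hrt; auto.
      * exact HbJ.
      * destruct (HJX u Ju) as [Bu | Hu].
        -- apply Hnu; split; auto. intro; subst; auto.
        -- subst u. apply HnJt, HCJ. right; split; auto.
    + destruct (H3 J B HJ HnbJ HB) as (b & Bb & HnJb & Hib). apply HnJb.
      apply (HJmax (add J b)); auto.
      * intros v Hv; left; auto.
      * intros v [Jv|Hv]; auto. subst; left; auto.
      * right; reflexivity.
  - intros z [Hz | [Bz Hz]].
    + subst z. apply (Hs B); [exact (proj1 HB)|]. intros u [[Hu | [Bu _]] Hne]; [contradiction|auto].
    + apply (Hs _ _ Hz). intros u [[Hu | [Bu _]] Hne]; unfold add, rem; auto.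
Qed.

Lemma dual_base_of (E : Type) (X : pmat E) (B : E -> Prop) :
  (forall J, ind X J -> sub J (grd X)) -> base X B -> base (dual X) (fun x => grd X x /\ ~ B x).
Proof.
  intros Hg HB. split.
  - split. intros u [Hu _]; auto. exists B; split; auto. intros u [_ Hu]; auto.
  - intros J [HJg (B' & HB' & HJB')] HsJ u Ju. split; [apply HJg; auto|].
    intro Bu.
    assert (HB'B : sub B' B).
    { intros v Bv'. apply NNPP; intro Hnv.
      apply (HJB' v); auto. apply HsJ. split; auto.
      apply (Hg B' (proj1 HB')); auto. }
    apply (HJB' u); auto. apply (proj2 HB' B (proj1 HB) HB'B); auto.
Qed.

Lemma dual_base_inv (E : Type) (X : pmat E) (D : E -> Prop) :
  base (dual X) D -> exists B, base X B /\ forall x, D x <-> grd X x /\ ~ B x.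
Proof.
  intros [[HDg (B & HB & HDB)] Hm]. exists B; split; auto.
  assert (H : sub (fun x => grd X x /\ ~ B x) D).
  { apply Hm. split. intros u [Hu _]; auto. exists B; split; auto. intros u [_ Hu]; auto.
    intros u Du. split; auto. }
  intros x; split. intros Dx; split; auto. apply H.
Qed.
Lemma ext_base (E : Type) (X : pmat E) (I : E -> Prop) :
  is_matroid X -> ind X I -> exists B, base X B /\ sub I B.
Proof.
  intros HX HI. destruct HX as (H0 & Hg & Hs & H3 & HIM).
  destruct (HIM I (grd X)) as (J & HJ & HIJ & HJX & HJm);
    [exact HI| exact (Hg I HI)| intros u Hu; exact Hu|].
  exists J; split; [split|exact HIJ]; [exact HJ|].
  intros K HK HJK. apply HJm; [exact HK|exact HJK|exact (Hg K HK)].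
Qed.

Lemma base_restr_dual (E : Type) (X : pmat E) (I : E -> Prop) :
  is_matroid X -> ind X I -> exists D, base (restr (dual X) (diff (grd X) I)) D.
Proof.
  intros HX HI. destruct (ext_base HX HI) as (B & HB & HIB).
  pose proof (dual_base_of (proj1 (proj2 HX)) HB) as HD.
  exists (fun x => grd X x /\ ~ B x). split.
  - split. exact (proj1 HD). intros u [Hu Hnu]. split; auto.
  - intros J [HJ HJs] HsJ. apply (proj2 HD); auto.
Qed.

Lemma loop_lemma (E : Type) (M : pmat E) (I D : E -> Prop) (e : E) :
  is_matroid M -> ind M I -> spano M I e ->
  base (restr (dual M) (diff (grd M) I)) D -> D e.
Proof.
  intros HM HI [[He Hsp] HnIe] [[[HDg (B' & HB' & HDB')] HDs] HDm].
  destruct HM as (H0 & Hg & Hs & H3 & HIM).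
  destruct Hsp as [HIe | (C & HC & HCe & HCs)]; [contradiction|].
  apply NNPP; intro HnDe.
  assert (Hind : ind (restr (dual M) (diff (grd M) I)) (add D e)).
  2:{ apply HnDe. apply (HDm _ Hind); [intros u Hu; left; auto| right; reflexivity]. }
  split; [split|].
  - intros u [Du|Hu]; auto. subst; auto.
  - destruct (classic (B' e)) as [HB'e | HnB'e].
    2:{ exists B'; split; auto. intros u [Du|Hu]; auto. subst; auto. }
    set (Y := fun u => I u \/ (B' u /\ u <> e)).
    destruct (HIM I Y) as (J & HJ & HIJ & HJY & HJm); auto.
    { intros u Hu; left; auto. }
    { intros u [Iu | [Bu _]]. apply (Hg I); auto. apply (Hg B' (proj1 HB')); auto. }
    assert (HbJ : base M J).
    { apply NNPP; intro HnbJ.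
      destruct (H3 J B' HJ HnbJ HB') as (z & Bz & HnJz & Hiz).
      destruct (classic (z = e)) as [Hze | Hze].
      - subst z. destruct HC as (_ & HnC & _). apply HnC.
        apply (Hs _ _ Hiz). intros u Cu. destruct (HCs u Cu) as [Iu|Hu]; [left; auto| right; auto].
      - apply HnJz. apply (HJm (add J z)); auto.
        + intros u Hu; left; auto.
        + intros u [Ju|Hu]; auto. subst; right; auto.
        + right; reflexivity. }
    exists J; split; auto.
    intros u [Du | Hu] HJu.
    + destruct (HJY u HJu) as [Iu | [Bu _]].
      * destruct (HDs u Du); auto.
      * apply (HDB' u); auto.
    + subst u. destruct (HJY e HJu) as [Iu | [_ Hne]]; auto.
  - intros u [Du|Hu]; auto. subst; split; auto.
Qed.
Lemma conn_lemma (E : Type) (N : pmat E) (C : E -> Prop) (x y : E) :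
  (forall u, grd N u) ->
  is_matroid N -> circuit (dual N) C -> C x -> C y -> x <> y -> circ_adj N x y.
Proof.
  intros Hgr HN HC Cx Cy Hxy. pose proof HN as HN'.
  destruct HN as (H0 & Hg & Hs & H3 & HIM).
  destruct HC as (HCg & HnC & HCr).
  destruct (HCr y Cy) as [_ (B & HB & HBd)].
  destruct (HCr x Cx) as [_ (B2 & HB2 & HB2d)].
  assert (By : B y).
  { apply NNPP; intro Hn. apply HnC. split; auto. exists B; split; auto.
    intros u Cu Bu. destruct (classic (u = y)) as [->|Hne]; auto. apply (HBd u); auto. split; auto. }
  assert (HnBx : ~ B x). { apply (HBd x). split; auto. }
  destruct (fund_circ HN' HB (HCg x Cx) HnBx) as (F & HF & Fx & HFs).
  destruct (classic (F y)) as [Fy | HnFy].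
  { exists F; auto. }
  exfalso.
  destruct (HIM (rem B y) (fun u => ~ C u)) as (J & HJ & HBJ & HJX & HJm).
  - apply (Hs B); [exact (proj1 HB)| intros v [Bv _]; auto].
  - intros u [Bu Hne] Cu. apply (HBd u); auto. split; auto.
  - intros u _. apply Hgr.
  - destruct (classic (base N J)) as [HbJ | HnbJ].
    + apply HnC. split; auto. exists J; split; auto. intros u Cu Ju. apply (HJX u Ju Cu).
    + destruct (H3 J B2 HJ HnbJ HB2) as (z & B2z & HnJz & Hiz).
      destruct (classic (C z)) as [Cz | HnCz].
      * assert (z = x) as ->.
        { apply NNPP; intro Hne. apply (HB2d z); auto. split; auto. }
        destruct HF as (_ & HnF & _). apply HnF. apply (Hs _ _ Hiz).
        intros u Fu. destruct (HFs u Fu) as [Bu | Hu]; [left | right; auto].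
        apply HBJ. split; auto. intro; subst; auto.
      * apply HnJz. apply (HJm (add J z)); auto.
        -- intros u Hu; left; auto.
        -- intros u [Ju|Hu]; auto. subst; auto.
        -- right; reflexivity.
Qed.

Lemma fin_max (E : Type) (P : (E -> Prop) -> Prop) (l : list E) :
  (forall I J, P I -> sub J I -> P J) -> forall K0, P K0 ->
  exists G, P G /\ sub K0 G /\
    forall J, P J -> sub G J -> (forall x, J x -> In x l \/ G x) -> sub J G.
Proof.
  intros Hs. induction l as [|a l IH]; intros K0 HK0.
  - exists K0; split; auto. split. intros u Hu; auto.
    intros J _ _ HJ u Ju. destruct (HJ u Ju) as [[]|]; auto.
  - destruct (classic (P (add K0 a))) as [Ha | Hna].
    + destruct (IH _ Ha) as (G & HG & HKG & HGm). exists G; split; auto. split.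
      intros u Hu; apply HKG; left; auto.
      intros J HJ HGJ HJl. apply HGm; auto. intros x Jx.
      destruct (HJl x Jx) as [[Hx|Hx]|Hx]; auto. right; apply HKG; right; auto.
    + destruct (IH _ HK0) as (G & HG & HKG & HGm). exists G; split; auto. split; auto.
      intros J HJ HGJ HJl. apply HGm; auto. intros x Jx.
      destruct (HJl x Jx) as [[Hx|Hx]|Hx]; auto. subst x. exfalso. apply Hna.
      apply (Hs J); auto. intros u [Ku|Hu]; [apply HGJ, HKG; auto| subst; auto].
Qed.
Lemma adj_sym (E : Type) (N : pmat E) x y : circ_adj N x y -> circ_adj N y x.
Proof. intros (C & HC & Cx & Cy). exists C; auto. Qed.

Lemma fin_ext (E : Type) (N : pmat E) (A A' : E -> Prop) :
  (forall x, A x <-> A' x) -> finitary (restr N A) -> finitary (restr N A').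
Proof.
  intros HAA Hf K HK HF. destruct (Hf K) as [HKi HKs].
  - intros u Ku. destruct (HK u Ku) as [H1 H2]. split; auto. apply HAA; auto.
  - intros F Hfin HFK. destruct (HF F Hfin HFK) as [Hi Hs]. split; auto.
    intros u Fu. apply HAA; auto.
  - split; auto. intros u Ku. apply HAA; auto.
Qed.

Lemma adj_E1 (E : Type) (N : pmat E) x y :
  circ_adj N x y -> E1 N x -> E1 N y.
Proof.
  intros Hxy [Hgx HnE0x]. split.
  - destruct Hxy as (C & (HCg & _) & _ & Cy). apply HCg; auto.
  - intros [Hgy Hfy]. apply HnE0x. split; auto.
    apply (fin_ext (A := component N y)); auto.
    intros z; split; intros [Hz Hr]; split; auto.
    + eapply rt_trans; [apply rt_step; exact Hxy| exact Hr].
    + eapply rt_trans; [apply rt_step; apply adj_sym; exact Hxy| exact Hr].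
Qed.

Lemma adj_A (E : Type) (N : pmat E) (A : E -> Prop) :
  (forall u, grd N u) -> is_matroid N ->
  (forall I, sub I (grd N) -> (ind N I <-> ind N (inter I A) /\ ind N (diff I A))) ->
  forall u v, circ_adj N u v -> A u -> A v.
Proof.
  intros Hgr HN HDS u v (C & (HCg & HnC & HCr) & Cu & Cv) Au.
  destruct HN as (H0 & Hg & Hs & H3 & HIM).
  apply NNPP; intro HnAv. apply HnC. apply HDS; auto. split.
  - apply (Hs _ _ (HCr v Cv)). intros z [Cz Az]. split; auto. intro; subst; auto.
  - apply (Hs _ _ (HCr u Cu)). intros z [Cz Az]. split; auto. intro; subst; auto.
Qed.

Lemma E1_notA (E : Type) (N : pmat E) (A : E -> Prop) :
  (forall u, grd N u) -> is_matroid N ->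
  (forall I, sub I (grd N) -> (ind N I <-> ind N (inter I A) /\ ind N (diff I A))) ->
  finitary (restr N A) -> forall x, E1 N x -> ~ A x.
Proof.
  intros Hgr HN HDS Hf x [_ HnE0] Ax. apply HnE0. split; auto.
  assert (Hc : forall z, component N x z -> A z).
  { intros z [_ Hr]. clear HnE0. revert Ax. induction Hr; intros Hx; eauto. eapply adj_A; eauto. }
  intros K HK HF. split; [| intros u Ku; apply (HK u Ku)].
  destruct (Hf K) as [HKi _].
  - intros u Ku. split; [apply Hc, (HK u Ku)| apply Hgr].
  - intros F Hfin HFK. destruct (HF F Hfin HFK) as [Hi Hs]. split; auto.
    intros u Fu; apply Hc, Hs; auto.
  - exact HKi.
Qed.
Lemma trans_to (E : Type) (N : pmat E) (A F : E -> Prop) :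
  (forall u, grd N u) -> is_matroid N ->
  (forall I, sub I (grd N) -> (ind N I <-> ind N (inter I A) /\ ind N (diff I A))) ->
  ind (dual N) F -> sub F (diff (grd N) A) ->
  ind (dual (restr N (diff (grd N) A))) F.
Proof.
  intros Hgr HN HDS [HFg (B & HB & HBd)] HFs.
  destruct HN as (H0 & Hg & Hs & H3 & HIM).
  split.
  - intros u Fu. split; auto.
  - exists (inter B (diff (grd N) A)). split.
    + split.
      * split. apply (Hs B); [exact (proj1 HB)| intros v [Bv _]; auto]. intros v [_ Hv]; auto.
      * intros J [HJ HJs] HBJ u Ju.
        assert (HJ' : ind N (union J (inter B A))).
        { apply HDS; [intros v _; apply Hgr|]. split.
          - apply (Hs B); [exact (proj1 HB)|]. intros v [[Jv|[Bv _]] Av]; auto.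
            destruct (HJs v Jv); contradiction.
          - apply (Hs J); auto. intros v [[Jv|[Bv Av]] HnAv]; auto. contradiction. }
        split; [| apply HJs; auto].
        apply (proj2 HB _ HJ'); [|left; auto].
        intros v Bv. destruct (classic (A v)) as [Av|HnAv]. right; split; auto.
        left. apply HBJ. split; auto. split; auto.
    + intros u Fu [Bu _]. apply (HBd u); auto.
Qed.

Lemma trans_from (E : Type) (N : pmat E) (A K : E -> Prop) :
  (forall u, grd N u) -> is_matroid N ->
  (forall I, sub I (grd N) -> (ind N I <-> ind N (inter I A) /\ ind N (diff I A))) ->
  ind (dual (restr N (diff (grd N) A))) K -> (forall x, K x -> ~ A x) ->
  ind (dual N) K.
Proof.
  intros Hgr HN HDS [HKg (B2 & HB2 & HB2d)] HKA.
  destruct HN as (H0 & Hg & Hs & H3 & HIM).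
  destruct (HIM (@empty E) A) as (BA & HBA & _ & HBAA & HBAm); auto.
  { intros u []. } { intros u _; apply Hgr. }
  destruct HB2 as [[HB2i HB2s] HB2m].
  split. intros u _; apply Hgr.
  exists (union BA B2). split.
  - split.
    + apply HDS; [intros v _; apply Hgr|]. split.
      * apply (Hs BA); auto. intros v [[BAv|B2v] Av]; auto. destruct (HB2s v B2v); contradiction.
      * apply (Hs B2); auto. intros v [[BAv|B2v] Av]; auto. exfalso; apply Av, HBAA; auto.
    + intros J HJ HBJ u Ju. apply HDS in HJ; [|intros v _; apply Hgr]. destruct HJ as [HJA HJnA].
      destruct (classic (A u)) as [Au | HnAu].
      * left. apply (HBAm (inter J A)); auto.
        -- intros v BAv. split; auto. apply HBJ; left; auto.
        -- intros v [_ Av]; auto.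
        -- split; auto.
      * right. apply (HB2m (diff J A)).
        -- split; auto. intros v [_ Hv]. split; auto.
        -- intros v B2v. split. apply HBJ; right; auto. destruct (HB2s v B2v) as [_ Hv]; auto.
        -- split; auto.
  - intros u Ku [BAu | B2u]. apply (HKA u); auto. apply (HB2d u); auto.
Qed.
Lemma goalA_fin (E : Type) (M N : pmat E) (I F : E -> Prop) :
  (forall x, grd M x) -> (forall x, grd N x) -> is_matroid M -> is_matroid N ->
  ind M I -> ind N I -> cond (contr M I) (contr N I) ->
  finite F -> sub F (spano M I) -> ind (dual N) F.
Proof.
  intros HMg HNg HM HN HIM HIN Hcond [l Hl] HFS.
  set (RM := restr (dual M) (diff (grd M) I)).
  set (RN := restr (dual N) (diff (grd N) I)).
  assert (HnI : forall x, F x -> ~ I x). { intros x Fx. apply (HFS x Fx). }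
  destruct (base_restr_dual HM HIM) as (DM & HDM).
  destruct (base_restr_dual HN HIN) as (DN & HDN).
  assert (HRNg : forall J, ind RN J -> sub J (grd RN)).
  { intros J [_ HJ] u Ju. split. apply HJ; auto. apply HNg. }
  pose proof (dual_base_of HRNg HDN) as HdDN.
  set (Q := restr (dual (contr N I)) (diff (grd (contr N I)) (diff (grd (contr N I)) F))).
  assert (HQsubF : forall x, grd Q x -> F x).
  { intros x [[Hx Hn] _]. apply NNPP; intro; apply Hn; split; auto. }
  assert (HFQ : forall x, F x -> grd Q x).
  { intros x Fx. assert (grd (contr N I) x) by (split; [split; [apply HNg| apply HnI; auto] | apply HNg]).
    split; [split; auto|auto]. intros [_ Hn]; auto. }
  assert (HQsc : forall K J, ind Q K -> sub J K -> ind Q J).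
  { intros K J [[HKg (D & HD & HDd)] HKs] HJK. split; [split|].
    - intros u Ju; apply HKg, HJK; auto.
    - exists D; split; [exact HD|]. intros u Ju; apply HDd, HJK; auto.
    - intros u Ju; apply HKs, HJK; auto. }
  assert (HQ0 : ind Q (@empty E)).
  { split; [split|]. intros u []. exists (fun x => grd RN x /\ ~ DN x); split; [exact HdDN|]. intros u []. intros u []. }
  destruct (fin_max l HQsc HQ0) as (G & HG & _ & HGm).
  assert (HbQ : base Q G).
  { split; auto. intros J HJ HGJ. apply HGm; auto. intros x Jx. left. apply Hl.
    apply HQsubF. destruct HJ as [[HJg _] HJs]. split; [apply HJs| apply HJg]; auto. }
  assert (Hloop : forall J, ind (contr M I) J -> sub J (spano M I) -> forall x, ~ J x).
  { intros J [_ (D & HD & HDd)] HJS x Jx. apply (HDd x Jx). exact (loop_lemma HM HIM (HJS x Jx) HD). }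
  assert (Hwave : wave (contr M I) (contr N I) F).
  { split.
    - intros x Fx. split; [split; [apply HMg| apply HnI; auto]| apply HMg].
    - exists (@empty E). split.
      + split.
        * split; [|intros u []]. split. intros u []. exists DM; split; [exact HDM| intros u []].
        * intros J [HJ HJF] _ x Jx. exfalso. apply (Hloop J HJ) with (x := x); auto.
          intros u Ju; apply HFS, HJF; auto.
      + split. intros u []. exists G; split; [exact HbQ| intros u []]. }
  destruct (Hcond F Hwave) as (B0 & HB0 & HB0M).
  assert (HB0e : forall x, ~ B0 x).
  { apply (Hloop B0 HB0M). intros u Bu. apply HFS, HQsubF.
    destruct HB0 as [[HBg _] _]. apply HBg; auto. }
  destruct (dual_base_inv HB0) as (D & HD & HDe).
  destruct HD as [[[HDg (D' & HD' & HDD')] HDs] _].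
  destruct (dual_base_inv HD') as (B1 & HB1 & HB1e).
  destruct HB1 as [[[_ (B2 & HB2 & HB2d)] _] _].
  split. intros u _; apply HNg.
  exists B2; split; auto.
  intros x Fx HB2x. apply (HB2d x); auto.
  assert (Dx : D x).
  { apply NNPP; intro HnD. apply (HB0e x). apply HDe. split; auto. }
  apply NNPP; intro HnB1. apply (HDD' x Dx). apply HB1e. split; auto.
  split; [split; [apply HNg| apply HnI; auto]| apply HNg].
Qed.
Theorem mainTheorem13 (E : Type) (M N : pmat E)
  (HEcount : exists f : E -> nat, forall x y, f x = f y -> x = y)
  (HMg : forall x, grd M x) (HNg : forall x, grd N x)
  (HM : is_matroid M) (HN : is_matroid N)
  (HMfin : finitary M) (HNsum : fin_cofin_sum N)
  (I : E -> Prop) (HIsafe : dually_safe M N I) (HIfeas : feasible M N I) :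
  base (restr (dual N) (inter (span M I) (E1 N))) (inter (spano M I) (E1 N)).
Proof.
  destruct HNsum as (A & HAg & HDS & HAfin & HAcof).
  destruct HIfeas as (HIM & HIN & Hcond).
  assert (HnA : forall x, E1 N x -> ~ A x) by (apply (E1_notA HNg HN HDS HAfin)).
  assert (HK : ind (dual N) (inter (spano M I) (E1 N))).
  { apply (trans_from HNg HN HDS).
    - apply HAcof.
      + intros x [_ Hx]. split; [split; [apply HNg| apply HnA; auto]| apply HNg].
      + intros F Hfin HFK. apply (trans_to HNg HN HDS).
        * apply (goalA_fin HMg HNg HM HN HIM HIN Hcond Hfin). intros x Fx; apply (HFK x Fx).
        * intros x Fx. split; [apply HNg| apply HnA, (HFK x Fx)].
    - intros x [_ Hx]; apply HnA; auto. }
  split.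
  - split; auto. intros x [[Hs HnI] He]. split; auto.
  - intros J [HJ HJs] HKJ w Jw. destruct (HJs w Jw) as [Hsw Hew].
    destruct (classic (I w)) as [Iw | HnIw].
    2:{ split; auto. split; auto. }
    exfalso. destruct (HIsafe w (conj Iw Hew)) as [_ [Hspo | (C & HC & Cw & HCs)]].
    + destruct Hspo as [_ HnIw]; auto.
    + pose proof HC as HC'. destruct HC' as (_ & HnC & _). apply HnC.
      destruct HJ as [HJg (B & HB & HBd)]. split. intros u _; apply HNg.
      exists B; split; auto. intros c Cc. apply HBd.
      destruct (classic (c = w)) as [-> | Hne]; auto.
      apply HKJ. destruct (HCs c Cc) as [Hc | Hc]; [| contradiction].
      split; auto. apply (adj_E1 (x := w)); auto.
      apply (conn_lemma HNg HN HC Cw Cc). auto.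
Qed.
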